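(* For every $n\ge 1$, $d(L(n,2n-2)) \ge n^2 - \lfloor \frac{8n}{5}\rfloor$.
   Context: For positive integers $n,k$, let $\mathcal{L}_{n,k}$ be the set of $n\times n$ squares all of whose entries are colored with colors from a fixed set of $k$ colors $\{1,\dots,k\}$ such that any two entries in the same row, or in the same column, have different colors. A partial coloring of an $n\times n$ square assigns colors from $\{1,\dots,k\}$ to some of its entries; the remaining entries are called uncolored. A partial coloring extends to $L(n,k)$ if the uncolored entries can be colored so that the resulting fully colored square lies in $\mathcal{L}_{n,k}$ (keeping the given colors), and it uniquely extends to $L(n,k)$ if there is exactly one such way. A defining set of the $k$-coloring of an $n\times n$ square is the set of colored entries of a partial coloring that uniquely extends to $L(n,k)$; the defining number $d(L(n,k))$ is the minimum cardinality of such a defining set. *)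

(* Defs.v *)
From mathcomp Require Import all_boot.
Set Implicit Arguments. Unset Strict Implicit. Unset Printing Implicit Defensive.

(* Cells of an n x n square are pairs (row, column) in 'I_n * 'I_n;
   colors are 'I_k (i.e. {1,...,k} shifted to {0,...,k-1}). *)
Definition cell (n : nat) := ('I_n * 'I_n)%type.

Definition coloring (n k : nat) := {ffun cell n -> 'I_k}.

(* A partial coloring: None = uncolored entry. *)
Definition pcoloring (n k : nat) := {ffun cell n -> option 'I_k}.

Definition in_L (n k : nat) (c : coloring n k) : Prop :=
  (forall i j j' : 'I_n, j != j' -> c (i, j) != c (i, j')) /\
  (forall i i' j : 'I_n, i != i' -> c (i, j) != c (i', j)).

Definition extends_to (n k : nat) (P : pcoloring n k) (c : coloring n k) : Prop :=
  forall x a, P x = Some a -> c x = a.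

Definition extends (n k : nat) (P : pcoloring n k) : Prop :=
  exists c : coloring n k, in_L c /\ extends_to P c.

Definition uniquely_extends (n k : nat) (P : pcoloring n k) : Prop :=
  exists! c : coloring n k, in_L c /\ extends_to P c.

Definition colored (n k : nat) (P : pcoloring n k) : {set cell n} :=
  [set x | P x != None].

Definition defining_set (n k : nat) (D : {set cell n}) : Prop :=
  exists P : pcoloring n k, uniquely_extends P /\ colored P = D.

(* Main.v *)
Require Import Defs.
From mathcomp Require Import all_boot.
From mathcomp Require Import zify.
Set Implicit Arguments. Unset Strict Implicit. Unset Printing Implicit Defensive.

Section S.
Variables (n k : nat) (c : coloring n k) (fx : pred (cell n)).
Hypothesis hL : in_L c.
Hypothesis hU : forall c' : coloring n k, in_L c' -> (forall v, fx v -> c' v = c v) -> c' = c.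
Hypothesis hk : k + 2 = n + n.

Definition inR (i : 'I_n) (b : 'I_k) := [exists j, c (i,j) == b].
Definition inC (j : 'I_n) (b : 'I_k) := [exists i, c (i,j) == b].

Lemma inRc i j : inR i (c (i,j)). Proof. by apply/existsP; exists j. Qed.
Lemma inCc i j : inC j (c (i,j)). Proof. by apply/existsP; exists i. Qed.

Lemma neqR i j j' : j != j' -> c (i,j) != c (i,j'). Proof. exact: hL.1. Qed.
Lemma neqC i i' j : i != i' -> c (i,j) != c (i',j). Proof. exact: hL.2. Qed.

Definition share (u u' : cell n) := (u.1 == u'.1) || (u.2 == u'.2).

Lemma share_sym u u' : share u u' = share u' u.
Proof. by rewrite /share eq_sym (eq_sym u.2). Qed.

Lemma share_neq (g : coloring n k) u u' : in_L g -> u != u' -> share u u' -> g u != g u'.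
Proof.
case: u u' => [i j] [i' j'] [H1 H2] Hne; rewrite /share /= => /orP[/eqP Ei|/eqP Ej]; subst.
- apply: H1. by apply: contraNneq Hne => ->.
- apply: H2. by apply: contraNneq Hne => ->.
Qed.

Lemma in_L_of (g : coloring n k) :
  (forall u u', u != u' -> share u u' -> g u != g u') -> in_L g.
Proof.
move=> H; split.
- move=> i j j' Hj; apply: H; last by rewrite /share eqxx.
  by apply: contra_neq Hj => -[->].
- move=> i i' j Hi; apply: H; last by rewrite /share eqxx orbT.
  by apply: contra_neq Hi => -[->].
Qed.

Lemma move (f : cell n -> cell n) :
  (forall v, f v != v -> ~~ fx v) ->
  (forall u u', f u != u -> u != u' -> share u u' -> c (f u) != c (f u')) ->
  (exists v, c (f v) != c v) -> False.
Proof.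
move=> Hf Hs [v Hv].
set c' : coloring n k := [ffun w => c (f w)].
have Lc' : in_L c'.
  apply: in_L_of => u u' Hne Hsh; rewrite !ffunE.
  have [Hu|Hu] := boolP (f u != u); first exact: Hs.
  have [Hu'|Hu'] := boolP (f u' != u').
    by rewrite eq_sym; apply: Hs => //; rewrite 1?eq_sym // share_sym.
  move/negPn/eqP: Hu => ->; move/negPn/eqP: Hu' => ->.
  exact: share_neq.
have H : forall w, fx w -> c' w = c w.
  move=> w Hw; rewrite ffunE.
  have [Hw'|/negPn/eqP -> //] := boolP (f w != w).
  by move: (Hf _ Hw'); rewrite Hw.
have E0 := hU Lc' H.
have := congr1 (fun g : coloring n k => g v) E0; rewrite ffunE => E.
by rewrite E eqxx in Hv.
Qed.

Lemma cov i j b : ~~ fx (i,j) -> inR i b || inC j b.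
Proof.
move=> Hij; apply/negPn/negP => Hb.
set c' : coloring n k := [ffun w => if w == (i,j) then b else c w].
have Lc' : in_L c'.
  apply: in_L_of => u u' Hne Hsh; rewrite !ffunE.
  have key : forall w, w != (i,j) -> share (i,j) w -> b != c w.
    case=> r s Hw /orP[/eqP /= Er|/eqP /= Es]; subst.
    - apply: contra Hb => /eqP ->; by rewrite inRc.
    - apply: contra Hb => /eqP ->; by rewrite inCc orbT.
  have [Eu|Eu] := eqVneq u (i,j); have [Eu'|Eu'] := eqVneq u' (i,j).
  - by subst; rewrite eqxx in Hne.
  - by subst u; apply: key.
  - subst u'; rewrite eq_sym; apply: key => //; by rewrite share_sym.
  - exact: share_neq.
have H : forall w, fx w -> c' w = c w.
  move=> w Hw; rewrite ffunE; case: eqP => // E; subst.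
  by rewrite Hw in Hij.
have E0 := hU Lc' H.
have := congr1 (fun g : coloring n k => g (i,j)) E0; rewrite ffunE eqxx => E.
by move: Hb; rewrite E inRc.
Qed.

Lemma two i j b1 b2 b3 : ~~ fx (i,j) -> b1 != b2 -> b1 != b3 -> b2 != b3 ->
  inR i b1 -> inC j b1 -> inR i b2 -> inC j b2 -> inR i b3 -> inC j b3 -> False.
Proof.
move=> Hij n12 n13 n23 r1 c1 r2 c2 r3 c3.
set RS := [set b | inR i b]; set CS := [set b | inC j b].
have cR : #|RS| = n.
  have -> : RS = (fun j' => c (i,j')) @: setT.
    apply/setP => b; rewrite inE; apply/existsP/imsetP => [[j' /eqP <-]|[j' _ ->]];
      by exists j'.
  rewrite card_imset ?cardsT ?card_ord // => a a' E.
  by apply/eqP/negPn/negP => H; move: (neqR i H); rewrite E eqxx.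
have cC : #|CS| = n.
  have -> : CS = (fun i' => c (i',j)) @: setT.
    apply/setP => b; rewrite inE; apply/existsP/imsetP => [[i' /eqP <-]|[i' _ ->]];
      by exists i'.
  rewrite card_imset ?cardsT ?card_ord // => a a' E.
  by apply/eqP/negPn/negP => H; move: (neqC j H); rewrite E eqxx.
have cU : #|RS :|: CS| = k.
  have -> : RS :|: CS = setT by apply/setP => b; rewrite !inE cov.
  by rewrite cardsT card_ord.
have cI : #|RS :&: CS| = 2.
  have := cardsUI RS CS; rewrite cU cR cC -hk => /eqP.
  by rewrite eqn_add2l => /eqP.
have sub : [set b1; b2; b3] \subset RS :&: CS.
  by apply/subsetP => b; rewrite !inE => /orP[/orP[/eqP->|/eqP->]|/eqP->]; apply/andP; split.
have := subset_leq_card sub; rewrite cI.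
have -> : [set b1; b2; b3] = b1 |: (b2 |: [set b3]).
  by apply/setP => b; rewrite !inE orbA.
by rewrite !cardsU1 cards1 !inE (negbTE n12) (negbTE n13) (negbTE n23).
Qed.

Lemma eqR i s s' : c (i,s) = c (i,s') -> s = s'.
Proof. move=> E; apply/eqP/negPn/negP => H; move: (neqR i H); by rewrite E eqxx. Qed.
Lemma eqC i i' s : c (i,s) = c (i',s) -> i = i'.
Proof. move=> E; apply/eqP/negPn/negP => H; move: (neqC s H); by rewrite E eqxx. Qed.

Lemma move2 (f : cell n -> cell n) (M : pred (cell n)) :
  (forall v, ~~ M v -> f v = v) -> (forall v, M v -> ~~ fx v) ->
  (forall u u', M u -> M u' -> u != u' -> share u u' -> c (f u) != c (f u')) ->
  (forall u u', M u -> ~~ M u' -> share u u' -> c (f u) != c u') ->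
  (exists v, c (f v) != c v) -> False.
Proof.
move=> H1 H2 H3 H4; apply: move.
- move=> v Hv; apply: H2; apply: contraR Hv => Hv; by rewrite H1.
- move=> u u' Hu Hne Hsh.
  have Mu : M u by apply: contraR Hu => Hu; rewrite H1.
  have [Mu'|Mu'] := boolP (M u'); first exact: H3.
  rewrite (H1 _ Mu'); exact: H4.
Qed.

Lemma notin_line (M : pred (cell n)) i j b :
  (forall s, c (i,s) = b -> M (i,s)) -> (forall r, c (r,j) = b -> M (r,j)) ->
  forall u', ~~ M u' -> share (i,j) u' -> b != c u'.
Proof.
move=> HR HC [r s] Hu; rewrite /share /= => /orP[/eqP E1|/eqP E1];
  rewrite -E1 in Hu *; apply/negP => /eqP E; symmetry in E; move: Hu;
  [by rewrite (HR _ E) | by rewrite (HC _ E)].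
Qed.

Lemma swapR i j j2 : j != j2 -> ~~ fx (i,j) -> ~~ fx (i,j2) ->
  inC j (c (i,j2)) || inC j2 (c (i,j)).
Proof.
move=> Hj Fx Fy; apply/negPn/negP; rewrite negb_or => /andP[N1 N2].
pose M := fun v : cell n => (v == (i,j)) || (v == (i,j2)).
pose f := fun v : cell n => if v == (i,j) then (i,j2) else if v == (i,j2) then (i,j) else v.
have Hxy : (i,j) != (i,j2) by apply/negP => /eqP [E]; move: Hj; rewrite E eqxx.
have Hyx : (i,j2) != (i,j) by rewrite eq_sym.
apply: (move2 (f := f) (M := M)).
- by move=> v; rewrite /M /f negb_or => /andP[/negbTE -> /negbTE ->].
- by move=> v /orP[] /eqP ->.
- move=> u u' /orP[] /eqP -> /orP[] /eqP ->; rewrite ?eqxx // /f ?eqxx ?(negbTE Hxy) ?(negbTE Hyx) => _ _;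
    first [exact: neqR Hj | rewrite eq_sym; exact: neqR Hj].
- move=> u u' /orP[] /eqP ->; rewrite /f ?eqxx ?(negbTE Hyx).
  + apply: notin_line => [s /eqR ->|r E]; first by rewrite /M eqxx orbT.
    have [Er|Er] := eqVneq r i; first by subst; rewrite /M eqxx.
    by move: N1; rewrite -E inCc.
  + apply: notin_line => [s /eqR ->|r E]; first by rewrite /M eqxx.
    have [Er|Er] := eqVneq r i; first by subst; rewrite /M eqxx orbT.
    by move: N2; rewrite -E inCc.
- exists (i,j); rewrite /f eqxx eq_sym; exact: neqR.
Qed.

Lemma swapC i i2 j : i != i2 -> ~~ fx (i,j) -> ~~ fx (i2,j) ->
  inR i (c (i2,j)) || inR i2 (c (i,j)).
Proof.
move=> Hi Fx Fy; apply/negPn/negP; rewrite negb_or => /andP[N1 N2].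
pose M := fun v : cell n => (v == (i,j)) || (v == (i2,j)).
pose f := fun v : cell n => if v == (i,j) then (i2,j) else if v == (i2,j) then (i,j) else v.
have Hxy : (i,j) != (i2,j) by apply/negP => /eqP [E]; move: Hi; rewrite E eqxx.
have Hyx : (i2,j) != (i,j) by rewrite eq_sym.
apply: (move2 (f := f) (M := M)).
- by move=> v; rewrite /M /f negb_or => /andP[/negbTE -> /negbTE ->].
- by move=> v /orP[] /eqP ->.
- move=> u u' /orP[] /eqP -> /orP[] /eqP ->; rewrite ?eqxx // /f ?eqxx ?(negbTE Hxy) ?(negbTE Hyx) => _ _;
    first [exact: neqC j Hi | rewrite eq_sym; exact: neqC j Hi].
- move=> u u' /orP[] /eqP ->; rewrite /f ?eqxx ?(negbTE Hyx).
  + apply: notin_line => [s E|r /eqC ->]; last by rewrite /M eqxx orbT.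
    have [Es|Es] := eqVneq s j; first by subst; rewrite /M eqxx.
    by move: N1; rewrite -E inRc.
  + apply: notin_line => [s E|r /eqC ->]; last by rewrite /M eqxx.
    have [Es|Es] := eqVneq s j; first by subst; rewrite /M eqxx orbT.
    by move: N2; rewrite -E inRc.
- exists (i,j); rewrite /f eqxx eq_sym; exact: neqC.
Qed.

Ltac nq := first [ assumption | (rewrite eq_sym; assumption)
  | (apply: neqR; assumption) | (apply: neqC; assumption) ].
Ltac mm := first [ assumption | exact: inRc | exact: inCc ].
Ltac t2 F b1 b2 b3 := exfalso; apply: (@two _ _ b1 b2 b3 F); try nq; try mm.

Lemma path5 i i2 i3 j j2 j3 : i != i2 -> i != i3 -> i2 != i3 ->
  j != j2 -> j != j3 -> j2 != j3 ->
  ~~ fx (i,j) -> ~~ fx (i,j2) -> ~~ fx (i2,j) -> ~~ fx (i3,j2) -> ~~ fx (i2,j3) -> False.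
Proof.
move=> hi12 hi13 hi23 hj12 hj13 hj23 Fx Fy Fz Fy' Fz'.
have hi21 : i2 != i by rewrite eq_sym.
have hi31 : i3 != i by rewrite eq_sym.
have hi32 : i3 != i2 by rewrite eq_sym.
have hj21 : j2 != j by rewrite eq_sym.
have hj31 : j3 != j by rewrite eq_sym.
have hj32 : j3 != j2 by rewrite eq_sym.
have S1 := swapR hj12 Fx Fy.
have S2 := swapC hi12 Fx Fz.
have S3 := swapR hj13 Fz Fz'.
have S4 := swapC hi13 Fy Fy'.
case/orP: S1 => S1; case/orP: S2 => S2.
-
  have [EYZ|NYZ] := eqVneq (c (i,j2)) (c (i2,j)); last by t2 Fx (c (i,j)) (c (i,j2)) (c (i2,j)).
  have Ru : inR i2 (c (i,j3)).
    case/orP: (cov (c (i,j3)) Fz) => // H.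
    by t2 Fx (c (i,j)) (c (i,j2)) (c (i,j3)).
  have CZ' : inC j (c (i2,j3)).
    case/orP: S3 => // H.
    have nZu : c (i2,j) != c (i,j3) by rewrite -EYZ; nq.
    by t2 Fz' (c (i2,j3)) (c (i2,j)) (c (i,j3)).
  have Rv : inR i (c (i2,j2)).
    case/orP: (cov (c (i2,j2)) Fx) => // H.
    by t2 Fz (c (i2,j)) (c (i2,j3)) (c (i2,j2)).
  have Ct : inC j2 (c (i3,j)).
    case/orP: (cov (c (i3,j)) Fy) => // H.
    have nYt : c (i,j2) != c (i3,j) by rewrite EYZ; nq.
    by t2 Fx (c (i,j)) (c (i,j2)) (c (i3,j)).
  case/orP: S4 => H.
  + by t2 Fy (c (i,j2)) (c (i2,j2)) (c (i3,j2)).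
  + have nYt : c (i3,j) != c (i,j2) by rewrite EYZ; nq.
    by t2 Fy' (c (i3,j2)) (c (i3,j)) (c (i,j2)).
-
  have Ru : inR i2 (c (i,j3)).
    case/orP: (cov (c (i,j3)) Fz) => // H.
    by t2 Fx (c (i,j)) (c (i,j2)) (c (i,j3)).
  have CZ' : inC j (c (i2,j3)).
    case/orP: S3 => // H.
    have [EZu|NZu] := eqVneq (c (i2,j)) (c (i,j3)).
      have RZ : inR i (c (i2,j)) by rewrite EZu; mm.
      have nYZ : c (i,j2) != c (i2,j) by rewrite EZu; nq.
      by t2 Fx (c (i,j)) (c (i,j2)) (c (i2,j)).
    by t2 Fz' (c (i2,j3)) (c (i2,j)) (c (i,j3)).
  have [E|N] := eqVneq (c (i2,j3)) (c (i,j)); last by t2 Fz (c (i2,j)) (c (i,j)) (c (i2,j3)).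
  have Rv : inR i (c (i2,j2)).
    case/orP: (cov (c (i2,j2)) Fx) => // H.
    have nAv : c (i,j) != c (i2,j2) by rewrite -E; nq.
    by t2 Fz (c (i2,j)) (c (i,j)) (c (i2,j2)).
  have RY : inR i3 (c (i,j2)).
    case/orP: S4 => // H.
    by t2 Fy (c (i,j2)) (c (i2,j2)) (c (i3,j2)).
  have [E2|N2] := eqVneq (c (i3,j)) (c (i,j2)); last first.
    case/orP: (cov (c (i3,j)) Fy) => H.
    + by t2 Fx (c (i,j)) (c (i,j2)) (c (i3,j)).
    + by t2 Fy' (c (i3,j2)) (c (i,j2)) (c (i3,j)).
  have nYs : c (i,j2) != c (i3,j3) by rewrite -E2; nq.
  case/orP: (cov (c (i3,j3)) Fy) => H.
  + case/orP: (cov (c (i3,j3)) Fz) => H2.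
    * by t2 Fz' (c (i2,j3)) (c (i,j3)) (c (i3,j3)).
    * have nAs : c (i,j) != c (i3,j3) by rewrite -E; nq.
      by t2 Fx (c (i,j)) (c (i,j2)) (c (i3,j3)).
  + by t2 Fy' (c (i3,j2)) (c (i,j2)) (c (i3,j3)).
-
  have Ct : inC j2 (c (i3,j)).
    case/orP: (cov (c (i3,j)) Fy) => // H.
    by t2 Fx (c (i,j)) (c (i2,j)) (c (i3,j)).
  have RY' : inR i (c (i3,j2)).
    case/orP: S4 => // H.
    have [EYt|NYt] := eqVneq (c (i,j2)) (c (i3,j)).
      have CY : inC j (c (i,j2)) by rewrite EYt; mm.
      have nZY : c (i2,j) != c (i,j2) by rewrite EYt; nq.
      by t2 Fx (c (i,j)) (c (i2,j)) (c (i,j2)).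
    by t2 Fy' (c (i3,j2)) (c (i,j2)) (c (i3,j)).
  have [E|N] := eqVneq (c (i3,j2)) (c (i,j)); last by t2 Fy (c (i,j2)) (c (i,j)) (c (i3,j2)).
  have Cv : inC j (c (i2,j2)).
    case/orP: (cov (c (i2,j2)) Fx) => // H.
    have nAv : c (i,j) != c (i2,j2) by rewrite -E; nq.
    by t2 Fy (c (i,j2)) (c (i,j)) (c (i2,j2)).
  have CZ : inC j3 (c (i2,j)).
    case/orP: S3 => // H.
    by t2 Fz (c (i2,j)) (c (i2,j2)) (c (i2,j3)).
  have [E2|N2] := eqVneq (c (i,j3)) (c (i2,j)); last first.
    case/orP: (cov (c (i,j3)) Fz) => H.
    + by t2 Fz' (c (i2,j3)) (c (i2,j)) (c (i,j3)).
    + by t2 Fx (c (i,j)) (c (i2,j)) (c (i,j3)).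
  have nZs : c (i2,j) != c (i3,j3) by rewrite -E2; nq.
  case/orP: (cov (c (i3,j3)) Fz) => H.
  + by t2 Fz' (c (i2,j3)) (c (i2,j)) (c (i3,j3)).
  + case/orP: (cov (c (i3,j3)) Fy) => H2.
    * have nAs : c (i,j) != c (i3,j3) by rewrite -E; nq.
      by t2 Fx (c (i,j)) (c (i2,j)) (c (i3,j3)).
    * by t2 Fy' (c (i3,j2)) (c (i3,j)) (c (i3,j3)).
-
  have [EvA|NvA] := eqVneq (c (i2,j2)) (c (i,j)); last first.
    case/orP: (cov (c (i2,j2)) Fx) => H.
    + by t2 Fy (c (i,j2)) (c (i,j)) (c (i2,j2)).
    + by t2 Fz (c (i2,j)) (c (i,j)) (c (i2,j2)).
  have CZ : inC j3 (c (i2,j)).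
    case/orP: S3 => // H.
    have nAZ' : c (i,j) != c (i2,j3) by rewrite -EvA; nq.
    by t2 Fz (c (i2,j)) (c (i,j)) (c (i2,j3)).
  have RY : inR i3 (c (i,j2)).
    case/orP: S4 => // H.
    have nAY' : c (i,j) != c (i3,j2) by rewrite -EvA; nq.
    by t2 Fy (c (i,j2)) (c (i,j)) (c (i3,j2)).
  have Cu : inC j (c (i,j3)).
    case/orP: (cov (c (i,j3)) Fz) => // H.
    have [EuZ|NuZ] := eqVneq (c (i,j3)) (c (i2,j)); first by rewrite EuZ; mm.
    by t2 Fz' (c (i2,j3)) (c (i2,j)) (c (i,j3)).
  have [Etu|Ntu] := eqVneq (c (i3,j)) (c (i,j3)); last first.
    case/orP: (cov (c (i3,j)) Fy) => H.
    + by t2 Fx (c (i,j)) (c (i,j3)) (c (i3,j)).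
    + have [EtY|NtY] := eqVneq (c (i3,j)) (c (i,j2)).
        have CY : inC j (c (i,j2)) by rewrite -EtY; mm.
        by t2 Fx (c (i,j)) (c (i,j3)) (c (i,j2)).
      by t2 Fy' (c (i3,j2)) (c (i,j2)) (c (i3,j)).
  have Rti : inR i (c (i3,j)) by rewrite Etu; mm.
  case/orP: (cov (c (i3,j3)) Fy) => H.
  + case/orP: (cov (c (i3,j3)) Fz) => H2.
    * have [EZs|NZs] := eqVneq (c (i2,j)) (c (i3,j3)).
        have RZ : inR i (c (i2,j)) by rewrite EZs.
        by t2 Fx (c (i,j)) (c (i3,j)) (c (i2,j)).
      by t2 Fz' (c (i2,j3)) (c (i2,j)) (c (i3,j3)).
    * have [EsA|NsA] := eqVneq (c (i3,j3)) (c (i,j)).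
        have CA3 : inC j3 (c (i,j)) by rewrite -EsA; mm.
        have nZ'A : c (i2,j3) != c (i,j) by rewrite -EvA; nq.
        by t2 Fz' (c (i2,j3)) (c (i2,j)) (c (i,j)).
      by t2 Fx (c (i,j)) (c (i3,j)) (c (i3,j3)).
  + have [EsY|NsY] := eqVneq (c (i3,j3)) (c (i,j2)).
      have CY3 : inC j3 (c (i,j2)) by rewrite -EsY; mm.
      case/orP: (cov (c (i3,j3)) Fz) => H2.
      * have [EZs|NZs] := eqVneq (c (i2,j)) (c (i3,j3)).
          have CY : inC j (c (i,j2)) by rewrite -EsY -EZs; mm.
          by t2 Fx (c (i,j)) (c (i,j3)) (c (i,j2)).
        by t2 Fz' (c (i2,j3)) (c (i2,j)) (c (i3,j3)).
      * have CY : inC j (c (i,j2)) by rewrite -EsY.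
        by t2 Fx (c (i,j)) (c (i,j3)) (c (i,j2)).
    by t2 Fy' (c (i3,j2)) (c (i,j2)) (c (i3,j3)).
Qed.


Lemma rowmove i (S : pred 'I_n) (g : 'I_n -> 'I_n) :
  (forall s, S s -> ~~ fx (i,s)) -> (forall s, S s -> S (g s)) -> {in S &, injective g} ->
  (forall s r, S s -> r != i -> c (i, g s) != c (r,s)) ->
  (exists s, S s && (g s != s)) -> False.
Proof.
move=> HU HS Hg HC [s0 /andP[S0 N0]].
pose M := fun v : cell n => (v.1 == i) && S v.2.
pose f := fun v : cell n => if M v then (i, g v.2) else v.
apply: (move2 (f := f) (M := M)).
- by move=> v Hv; rewrite /f (negbTE Hv).
- by case=> r s /andP[/= /eqP -> Ss]; apply: HU.
- case=> r s [r' s'] /andP[/= /eqP -> Ss] /andP[/= /eqP -> Ss'] Hne _.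
  rewrite /f /M /= eqxx Ss Ss' /=; apply: neqR.
  apply: contra_neq Hne => /Hg E; by rewrite E.
- case=> r s [r' s'] /andP[/= /eqP -> Ss]; rewrite /f /M /= eqxx Ss /= => Hn.
  rewrite /share /= => /orP[/eqP E|/eqP E]; rewrite -E in Hn *.
  + apply: neqR; apply: contraNneq Hn => <-; by rewrite eqxx (HS _ Ss).
  + have Hr : r' != i by apply: contraNneq Hn => ->; rewrite eqxx Ss.
    exact: HC.
- exists (i,s0); rewrite /f /M /= eqxx S0 /=; exact: neqR.
Qed.

Lemma colmove j (S : pred 'I_n) (g : 'I_n -> 'I_n) :
  (forall r, S r -> ~~ fx (r,j)) -> (forall r, S r -> S (g r)) -> {in S &, injective g} ->
  (forall r s, S r -> s != j -> c (g r, j) != c (r,s)) ->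
  (exists r, S r && (g r != r)) -> False.
Proof.
move=> HU HS Hg HC [r0 /andP[S0 N0]].
pose M := fun v : cell n => S v.1 && (v.2 == j).
pose f := fun v : cell n => if M v then (g v.1, j) else v.
apply: (move2 (f := f) (M := M)).
- by move=> v Hv; rewrite /f (negbTE Hv).
- by case=> r s /andP[/= Ss /eqP ->]; apply: HU.
- case=> r s [r' s'] /andP[/= Ss /eqP ->] /andP[/= Ss' /eqP ->] Hne _.
  rewrite /f /M /= eqxx Ss Ss' /=; apply: neqC.
  apply: contra_neq Hne => /Hg E; by rewrite E.
- case=> r s [r' s'] /andP[/= Ss /eqP ->]; rewrite /f /M /= eqxx Ss /= => Hn.
  rewrite /share /= => /orP[/eqP E|/eqP E]; rewrite -E in Hn *.
  + have Hs : s' != j by apply: contraNneq Hn => ->; rewrite eqxx Ss.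
    exact: HC.
  + apply: neqC; apply: contraNneq Hn => <-; by rewrite eqxx (HS _ Ss).
- exists (r0,j); rewrite /f /M /= eqxx S0 /=; exact: neqC.
Qed.

Ltac neqs := repeat (first [rewrite eqxx /= |
  match goal with H : is_true (?a != ?b) |- context [?a == ?b] => rewrite (negbTE H) /= end]).

Lemma rotR i j1 j2 j3 : j1 != j2 -> j1 != j3 -> j2 != j3 ->
  ~~ fx (i,j1) -> ~~ fx (i,j2) -> ~~ fx (i,j3) ->
  inC j1 (c (i,j2)) -> inC j2 (c (i,j3)) -> inC j3 (c (i,j1)) -> False.
Proof.
move=> h12 h13 h23 F1 F2 F3 C12 C23 C31.
have h21 : j2 != j1 by rewrite eq_sym.
have h31 : j3 != j1 by rewrite eq_sym.
have h32 : j3 != j2 by rewrite eq_sym.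
pose S := fun s : 'I_n => (s == j1) || (s == j2) || (s == j3).
pose g := fun s : 'I_n => if s == j1 then j3 else if s == j2 then j1 else if s == j3 then j2 else s.
apply: (rowmove (i := i) (S := S) (g := g)).
- by move=> s; rewrite /S /= => /orP[/orP[]|] /eqP ->.
- by move=> s; rewrite /S /= => /orP[/orP[]|] /eqP ->; rewrite /g; neqs; rewrite ?orbT.
- move=> a b; rewrite /S /= => /orP[/orP[]|] /eqP -> /orP[/orP[]|] /eqP ->; rewrite /g; neqs => // E;
    by move: h12 h13 h23; rewrite E eqxx.
- move=> s r; rewrite /S /= => /orP[/orP[]|] /eqP -> Hr; rewrite /g; neqs; apply/negP => /eqP E.
  + have H : inC j1 (c (i,j3)) by rewrite E; mm.
    by t2 F1 (c (i,j1)) (c (i,j2)) (c (i,j3)).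
  + have H : inC j2 (c (i,j1)) by rewrite E; mm.
    by t2 F2 (c (i,j2)) (c (i,j1)) (c (i,j3)).
  + have H : inC j3 (c (i,j2)) by rewrite E; mm.
    by t2 F3 (c (i,j3)) (c (i,j1)) (c (i,j2)).
- by exists j1; rewrite /S /g; neqs.
Qed.

Lemma row3 i j1 j2 j3 : j1 != j2 -> j1 != j3 -> j2 != j3 ->
  ~~ fx (i,j1) -> ~~ fx (i,j2) -> ~~ fx (i,j3) -> False.
Proof.
move=> h12 h13 h23 F1 F2 F3.
have h21 : j2 != j1 by rewrite eq_sym.
have h31 : j3 != j1 by rewrite eq_sym.
have h32 : j3 != j2 by rewrite eq_sym.
case/orP: (swapR h12 F1 F2) => P12; case/orP: (swapR h23 F2 F3) => P23;
  case/orP: (swapR h13 F1 F3) => P13;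
  first [ by t2 F1 (c (i,j1)) (c (i,j2)) (c (i,j3))
        | by t2 F2 (c (i,j2)) (c (i,j1)) (c (i,j3))
        | by t2 F3 (c (i,j3)) (c (i,j1)) (c (i,j2))
        | by apply: (rotR h12 h13 h23 F1 F2 F3)
        | by apply: (rotR h13 h12 h32 F1 F3 F2) ].
Qed.

Lemma rotC j i1 i2 i3 : i1 != i2 -> i1 != i3 -> i2 != i3 ->
  ~~ fx (i1,j) -> ~~ fx (i2,j) -> ~~ fx (i3,j) ->
  inR i1 (c (i2,j)) -> inR i2 (c (i3,j)) -> inR i3 (c (i1,j)) -> False.
Proof.
move=> h12 h13 h23 F1 F2 F3 C12 C23 C31.
have h21 : i2 != i1 by rewrite eq_sym.
have h31 : i3 != i1 by rewrite eq_sym.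
have h32 : i3 != i2 by rewrite eq_sym.
pose S := fun s : 'I_n => (s == i1) || (s == i2) || (s == i3).
pose g := fun s : 'I_n => if s == i1 then i3 else if s == i2 then i1 else if s == i3 then i2 else s.
apply: (colmove (j := j) (S := S) (g := g)).
- by move=> s; rewrite /S /= => /orP[/orP[]|] /eqP ->.
- by move=> s; rewrite /S /= => /orP[/orP[]|] /eqP ->; rewrite /g; neqs; rewrite ?orbT.
- move=> a b; rewrite /S /= => /orP[/orP[]|] /eqP -> /orP[/orP[]|] /eqP ->; rewrite /g; neqs => // E;
    by move: h12 h13 h23; rewrite E eqxx.
- move=> s r; rewrite /S /= => /orP[/orP[]|] /eqP -> Hr; rewrite /g; neqs; apply/negP => /eqP E.
  + have H : inR i1 (c (i3,j)) by rewrite E; mm.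
    by t2 F1 (c (i1,j)) (c (i2,j)) (c (i3,j)).
  + have H : inR i2 (c (i1,j)) by rewrite E; mm.
    by t2 F2 (c (i2,j)) (c (i1,j)) (c (i3,j)).
  + have H : inR i3 (c (i2,j)) by rewrite E; mm.
    by t2 F3 (c (i3,j)) (c (i1,j)) (c (i2,j)).
- by exists i1; rewrite /S /g; neqs.
Qed.

Lemma col3 j i1 i2 i3 : i1 != i2 -> i1 != i3 -> i2 != i3 ->
  ~~ fx (i1,j) -> ~~ fx (i2,j) -> ~~ fx (i3,j) -> False.
Proof.
move=> h12 h13 h23 F1 F2 F3.
have h21 : i2 != i1 by rewrite eq_sym.
have h31 : i3 != i1 by rewrite eq_sym.
have h32 : i3 != i2 by rewrite eq_sym.
case/orP: (swapC h12 F1 F2) => P12; case/orP: (swapC h23 F2 F3) => P23;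
  case/orP: (swapC h13 F1 F3) => P13;
  first [ by t2 F1 (c (i1,j)) (c (i2,j)) (c (i3,j))
        | by t2 F2 (c (i2,j)) (c (i1,j)) (c (i3,j))
        | by t2 F3 (c (i3,j)) (c (i1,j)) (c (i2,j))
        | by apply: (rotC h12 h13 h23 F1 F2 F3)
        | by apply: (rotC h13 h12 h32 F1 F3 F2) ].
Qed.

Lemma cycle4 i i2 j j2 : i != i2 -> j != j2 ->
  ~~ fx (i,j) -> ~~ fx (i,j2) -> ~~ fx (i2,j) -> ~~ fx (i2,j2) -> False.
Proof.
move=> hi hj F1 F2 F3 F4.
have hi' : i2 != i by rewrite eq_sym.
have hj' : j2 != j by rewrite eq_sym.
pose oi := fun r : 'I_n => if r == i then i2 else i.
pose oj := fun s : 'I_n => if s == j then j2 else j.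
pose B := fun v : cell n => ((v.1 == i) || (v.1 == i2)) && ((v.2 == j) || (v.2 == j2)).
pose ch := fun v : cell n =>
  [forall r, ((r != i) && (r != i2)) ==> (c (r, v.2) != c (v.1, oj v.2))].
pose f := fun v : cell n => if B v then (if ch v then (v.1, oj v.2) else (oi v.1, v.2)) else v.
have FB : forall v, B v -> ~~ fx v.
  by case=> r s; rewrite /B /= => /andP[/orP[] /eqP -> /orP[] /eqP ->].
have corner : forall v, B v ->
    ch v || [forall s, ((s != j) && (s != j2)) ==> (c (v.1, s) != c (oi v.1, v.2))].
  case=> a b Bv; apply/negPn/negP; rewrite negb_or => /andP[/forallPn [r Hr] /forallPn [s Hs]].
  move: Hr; rewrite negb_imply negbK => /andP[/andP[r1 r2] /eqP Er].
  move: Hs; rewrite negb_imply negbK => /andP[/andP[s1 s2] /eqP Es].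
  simpl in Er, Es.
  have Fv := FB _ Bv.
  move: Bv; rewrite /B /= => /andP[/orP[] /eqP Ea /orP[] /eqP Eb]; subst a b;
    rewrite /oi /oj ?eqxx ?(negbTE hi) ?(negbTE hi') ?(negbTE hj) ?(negbTE hj') /= in Er Es *;
  [ have C1 : inC j (c (i,j2)) by rewrite -Er; mm
  | have C1 : inC j2 (c (i,j)) by rewrite -Er; mm
  | have C1 : inC j (c (i2,j2)) by rewrite -Er; mm
  | have C1 : inC j2 (c (i2,j)) by rewrite -Er; mm ];
  [ have R1 : inR i (c (i2,j)) by rewrite -Es; mm
  | have R1 : inR i (c (i2,j2)) by rewrite -Es; mm
  | have R1 : inR i2 (c (i,j)) by rewrite -Es; mm
  | have R1 : inR i2 (c (i,j2)) by rewrite -Es; mm ];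
  [ have N : c (i,j2) != c (i2,j) by rewrite -Er; apply: neqC; rewrite r2
  | have N : c (i,j) != c (i2,j2) by rewrite -Er; apply: neqC; rewrite r2
  | have N : c (i2,j2) != c (i,j) by rewrite -Er; apply: neqC; rewrite r1
  | have N : c (i2,j) != c (i,j2) by rewrite -Er; apply: neqC; rewrite r1 ];
  first [ by t2 Fv (c (i,j)) (c (i,j2)) (c (i2,j))
        | by t2 Fv (c (i,j2)) (c (i,j)) (c (i2,j2))
        | by t2 Fv (c (i2,j)) (c (i2,j2)) (c (i,j))
        | by t2 Fv (c (i2,j2)) (c (i2,j)) (c (i,j2)) ].
have Ooj : forall s, (oj s == j) || (oj s == j2).
  by move=> s; rewrite /oj; case: ifP; rewrite eqxx ?orbT.
have Ooi : forall r, (oi r == i) || (oi r == i2).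
  by move=> r; rewrite /oi; case: ifP; rewrite eqxx ?orbT.
apply: (move2 (f := f) (M := B)).
- by move=> v Hv; rewrite /f (negbTE Hv).
- exact: FB.
- case=> r s [r' s'] Bu Bu'; move: Bu Bu' (Bu) (Bu'); rewrite {1 2}/B /=.
  move=> /andP[/orP[] /eqP -> /orP[] /eqP ->] /andP[/orP[] /eqP -> /orP[] /eqP ->] Bu Bu';
  rewrite /f Bu ?Bu' /oi /oj /share /= ?xpair_eqE; neqs; move=> // H1 H2;
  do 2 (case: ifP => _ /=); nq.
- case=> r s [r' s'] Bu Bu' Hsh.
  have K := corner _ Bu.
  move: Bu' Hsh; rewrite /f Bu /B /share /=.
  move: Bu; rewrite /B /= => /andP[Hr Hs].
  move=> Bu' /orP[/eqP E|/eqP E]; [subst r' | subst s'].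
  + move: Bu'; rewrite Hr /= negb_or => /andP[t1 t2].
    case: ifP => Hc /=.
    * apply: neqR; move: (Ooj s) => /orP[] /eqP ->; by rewrite eq_sym.
    * move: K; rewrite Hc /= => /forallP /(_ s') /implyP; rewrite t1 t2; move/(_ isT).
      by rewrite eq_sym.
  + move: Bu'; rewrite Hs andbT negb_or => /andP[t1 t2].
    case: ifP => Hc /=.
    * move/forallP: Hc => /(_ r') /implyP; rewrite t1 t2; move/(_ isT).
      by rewrite eq_sym.
    * apply: neqC; move: (Ooi r) => /orP[] /eqP ->; by rewrite eq_sym.
- exists (i,j); rewrite /f.
  have -> : B (i,j) by rewrite /B /= !eqxx.
  case: ifP => _ /=; rewrite /oi /oj eqxx; [rewrite eq_sym; exact: neqR | rewrite eq_sym; exact: neqC].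
Qed.


Lemma deg2 i r i3 j s j3 : r != i -> i3 != i -> s != j -> j3 != j ->
  ~~ fx (i,j) -> ~~ fx (i,s) -> ~~ fx (r,j) -> ~~ fx (i3,s) -> ~~ fx (r,j3) -> False.
Proof.
move=> hr hi3 hs hj3 F1 F2 F3 F4 F5.
have [E1|N1] := eqVneq i3 r; have [E2|N2] := eqVneq j3 s.
- rewrite E1 in F4; apply: (cycle4 (i:=i) (i2:=r) (j:=j) (j2:=s)) => //; by rewrite eq_sym.
- rewrite E1 in F4; apply: (row3 (i:=r) (j1:=j) (j2:=j3) (j3:=s)) => //; by rewrite eq_sym.
- rewrite E2 in F5; apply: (col3 (j:=s) (i1:=i) (i2:=i3) (i3:=r)) => //; by rewrite eq_sym.
- apply: (path5 (i:=i) (i2:=r) (i3:=i3) (j:=j) (j2:=s) (j3:=j3)) => //;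
    by rewrite eq_sym.
Qed.

Definition U := [set v | ~~ fx v].
Definition rc i := #|[set s | ~~ fx (i,s)]|.
Definition cc j := #|[set r | ~~ fx (r,j)]|.

Lemma rc_le2 i : rc i <= 2.
Proof.
rewrite leqNgt; apply/negP => /card_gt2P [x [y [z [[Hx Hy Hz] [nxy nyz nzx]]]]].
rewrite !inE in Hx Hy Hz.
by apply: (row3 (i:=i) nxy _ nyz Hx Hy Hz); rewrite eq_sym.
Qed.

Lemma cc_le2 j : cc j <= 2.
Proof.
rewrite leqNgt; apply/negP => /card_gt2P [x [y [z [[Hx Hy Hz] [nxy nyz nzx]]]]].
rewrite !inE in Hx Hy Hz.
by apply: (col3 (j:=j) nxy _ nyz Hx Hy Hz); rewrite eq_sym.
Qed.

Lemma rc_gt0 i j : ~~ fx (i,j) -> 0 < rc i.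
Proof. by move=> H; apply/card_gt0P; exists j; rewrite inE. Qed.
Lemma cc_gt0 i j : ~~ fx (i,j) -> 0 < cc j.
Proof. by move=> H; apply/card_gt0P; exists i; rewrite inE. Qed.

Lemma sum_row : \sum_(v in U) 2 %/ rc v.1 <= 2 * n.
Proof.
have -> : \sum_(v in U) 2 %/ rc v.1 = \sum_i \sum_(s | ~~ fx (i,s)) 2 %/ rc i.
  rewrite pair_big_dep /=; apply: eq_bigl => -[a b]; by rewrite inE.
have -> : 2 * n = \sum_(i < n) 2 by rewrite sum_nat_const card_ord mulnC.
apply: leq_sum => i _.
rewrite (eq_bigl (fun s => s \in [set s | ~~ fx (i,s)])); last by move=> s; rewrite inE.
by rewrite sum_nat_const -/(rc i) mulnC leq_trunc_div.
Qed.

Lemma sum_col : \sum_(v in U) 2 %/ cc v.2 <= 2 * n.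
Proof.
have -> : \sum_(v in U) 2 %/ cc v.2 = \sum_j \sum_(r | ~~ fx (r,j)) 2 %/ cc j.
  rewrite (exchange_big_dep xpredT) //= pair_big_dep /=.
  apply: eq_bigl => -[a b]; by rewrite inE.
have -> : 2 * n = \sum_(i < n) 2 by rewrite sum_nat_const card_ord mulnC.
apply: leq_sum => j _.
rewrite (eq_bigl (fun r => r \in [set r | ~~ fx (r,j)])); last by move=> r; rewrite inE.
by rewrite sum_nat_const -/(cc j) mulnC leq_trunc_div.
Qed.

Definition U1 := [set v | ~~ fx v && ((rc v.1 == 2) != (cc v.2 == 2))].
Definition U2 := [set v | ~~ fx v && (rc v.1 == 2) && (cc v.2 == 2)].

Lemma sum_ind (A B : {set cell n}) : B \subset A -> \sum_(v in A) (v \in B) = #|B|.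
Proof.
move=> sBA.
rewrite (eq_bigr (fun v => if v \in B then 1 else 0)); last by move=> v _; case: (v \in B).
rewrite -big_mkcondr sum1dep_card.
have -> : [set x | (x \in A) && (x \in B)] = B.
  apply/setP => v; rewrite inE.
  by case: (boolP (v \in B)) => H; rewrite ?andbT ?andbF // (subsetP sBA).
by [].
Qed.

Lemma pointwise v : v \in U -> 5 + (v \in U1) <= 2 * (2 %/ rc v.1 + 2 %/ cc v.2) + (v \in U2).
Proof.
case: v => a b; rewrite !inE /= => Hv; rewrite Hv /=.
have := rc_le2 a; have := rc_gt0 Hv.
have := cc_le2 b; have := cc_gt0 Hv.
move: (rc a) (cc b) => x y.
by case: x => [|[|[|x]]] //; case: y => [|[|[|y]]].
Qed.

Definition rm (v : cell n) := odflt v.2 [pick s | (s != v.2) && ~~ fx (v.1, s)].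
Definition cm (v : cell n) := odflt v.1 [pick r | (r != v.1) && ~~ fx (r, v.2)].

Lemma rm_spec v : rc v.1 = 2 -> (rm v != v.2) && ~~ fx (v.1, rm v).
Proof.
move=> H2; rewrite /rm; case: pickP => [s Hs //|H].
have : 1 < rc v.1 by rewrite H2.
move/card_gt1P => [x [y [Hx Hy nxy]]]; rewrite !inE in Hx Hy.
have [Ex|Nx] := eqVneq x v.2.
- subst x; move: (H y); by rewrite eq_sym nxy Hy.
- move: (H x); by rewrite Nx Hx.
Qed.

Lemma cm_spec v : cc v.2 = 2 -> (cm v != v.1) && ~~ fx (cm v, v.2).
Proof.
move=> H2; rewrite /cm; case: pickP => [s Hs //|H].
have : 1 < cc v.2 by rewrite H2.
move/card_gt1P => [x [y [Hx Hy nxy]]]; rewrite !inE in Hx Hy.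
have [Ex|Nx] := eqVneq x v.1.
- subst x; move: (H y); by rewrite eq_sym nxy Hy.
- move: (H x); by rewrite Nx Hx.
Qed.

Definition g (v : cell n) := if (v.1, rm v) \in U1 then (v.1, rm v) else (cm v, v.2).

Lemma g_U1 v : v \in U2 -> g v \in U1.
Proof.
case: v => i j; rewrite inE /= => /andP[/andP[F /eqP R2] /eqP C2].
have /andP[hs Fs] := rm_spec (v:=(i,j)) R2.
have /andP[hr Fr] := cm_spec (v:=(i,j)) C2.
rewrite /g /=; case: ifP => // NU.
move: (rm (i,j)) (cm (i,j)) hs Fs hr Fr NU => s r /= hs Fs hr Fr NU.
rewrite inE /= Fr C2 eqxx /=.
suff Rr2' : rc r != 2 by rewrite (negbTE Rr2').
apply/negP => /eqP Rr2.
have Cs2 : cc s = 2.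
  by move: NU; rewrite inE /= Fs R2 eqxx /=; have [//|N] := eqVneq (cc s) 2.
have /andP[hi3 Fi3] := cm_spec (v:=(i,s)) Cs2.
have /andP[hj3 Fj3] := rm_spec (v:=(r,j)) Rr2.
exact: (deg2 hr hi3 hs hj3 F Fs Fr Fi3 Fj3).
Qed.

Lemma g_mate v : v \in U2 ->
  ((g v).1 == v.1) && ((g v).2 != v.2) || ((g v).2 == v.2) && ((g v).1 != v.1).
Proof.
case: v => i j; rewrite inE /= => /andP[/andP[F /eqP R2] /eqP C2].
have /andP[hs Fs] := rm_spec (v:=(i,j)) R2.
have /andP[hr Fr] := cm_spec (v:=(i,j)) C2.
rewrite /g /=; case: ifP => _ /=.
- by rewrite eqxx hs.
- by rewrite eqxx hr orbT.
Qed.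

Lemma g_inj : {in U2 &, injective g}.
Proof.
move=> v v' Hv Hv' E.
have W := g_U1 Hv'.
have M1 := g_mate Hv; rewrite E in M1.
have M2 := g_mate Hv'.
clear E; move: W M1 M2; rewrite inE.
move: (g v') => [p q] /andP[FW NW] M1 M2.
move: Hv Hv' M1 M2; rewrite !inE.
case: v => a b; case: v' => a' b' /= /andP[/andP[Fv /eqP R2] /eqP C2]
  /andP[/andP[Fv' /eqP R2'] /eqP C2'].
case/orP => /andP[/eqP Ep Nq]; case/orP => /andP[/eqP Ep' Nq']; subst.
- have [Eb|Nb] := eqVneq b b'; first by subst.
  by exfalso; apply: (row3 Nb _ _ Fv Fv' FW); rewrite eq_sym.
- by move: NW; rewrite R2 C2' eqxx.
- by move: NW; rewrite R2' C2 eqxx.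
- have [Ea|Na] := eqVneq a a'; first by subst.
  by exfalso; apply: (col3 Na _ _ Fv Fv' FW); rewrite eq_sym.
Qed.

Lemma U2_le_U1 : #|U2| <= #|U1|.
Proof.
rewrite -(card_in_imset g_inj); apply: subset_leq_card.
apply/subsetP => w /imsetP [v Hv ->]; exact: g_U1.
Qed.

Lemma main_count : 5 * #|U| <= 8 * n.
Proof.
have S1 : U1 \subset U by apply/subsetP => v; rewrite !inE => /andP[].
have S2 : U2 \subset U by apply/subsetP => v; rewrite !inE => /andP[/andP[]].
have H : \sum_(v in U) (5 + (v \in U1)) <=
    \sum_(v in U) (2 * (2 %/ rc v.1 + 2 %/ cc v.2) + (v \in U2)).
  by apply: leq_sum => v; exact: pointwise.
rewrite !big_split /= sum_nat_const !sum_ind // in H.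
have HR := sum_row; have HC := sum_col; have HU := U2_le_U1.
move: H HR HC HU.
set R := \sum_(i in U) 2 %/ rc i.1; set C := \sum_(i in U) 2 %/ cc i.2.
rewrite big1_eq.
clearbody R C. move: #|U| #|U1| #|U2| => a b d. lia.
Qed.

End S.

Unset Implicit Arguments.

Theorem mainTheorem2 (n : nat) (D : {set cell n}) :
  1 <= n -> defining_set (2 * n - 2) D ->
  n ^ 2 - (8 * n) %/ 5 <= #|D|.
Proof.
move=> n1 [P [[c [[Lc Ec] Uc]] HD]].
pose fx := fun v : cell n => P v != None.
have hU : forall c' : coloring n (2 * n - 2), in_L c' ->
    (forall v, fx v -> c' v = c v) -> c' = c.
  move=> c' Lc' Hc'; symmetry; apply: Uc; split => // x a Pa.
  rewrite Hc'; first exact: Ec.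
  by rewrite /fx Pa.
have hk : 2 * n - 2 + 2 = n + n by lia.
have H := main_count Lc hU hk.
have UD : U fx = ~: D.
  by rewrite -HD; apply/setP => v; rewrite !inE.
rewrite UD in H.
have cD := cardsC D.
rewrite card_prod card_ord in cD.
have HU : #|~: D| <= (8 * n) %/ 5 by rewrite leq_divRL // mulnC.
rewrite expnS expn1.
move: HU cD; move: #|~: D| #|D| ((8 * n) %/ 5) => a b m HU cD.
lia.
Qed.
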